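(* Let $K$ be an algebraically closed field, $\mathcal{T}$ a $\operatorname{Hom}$-finite Krull–Schmidt triangulated $K$-category with Jacobson radical $\mathcal{J}$, $\mathcal{I}$ an ideal, and $f:X\to Y$ a morphism between indecomposable objects $X$ and $Y$. Then (1) $f$ is left $\mathcal{I}$-irreducible if and only if $f\in\mathcal{I}(X,Y)\setminus(\mathcal{J}\mathcal{I})(X,Y)$; (2) $f$ is right $\mathcal{I}$-irreducible if and only if $f\in\mathcal{I}(X,Y)\setminus(\mathcal{I}\mathcal{J})(X,Y)$; (3) $f$ is $\mathcal{I}$-irreducible if and only if $f\in\mathcal{I}(X,Y)\setminus\big((\mathcal{J}\mathcal{I})(X,Y)\cup(\mathcal{I}\mathcal{J})(X,Y)\big)$.
   Context: Composition of $h_1$ then $h_2$ is $h_2h_1$. An ideal: subgroups $\mathcal{I}(X,Y)\subseteq\operatorname{Hom}(X,Y)$ closed under composition. For ideals $\mathcal{A},\mathcal{B}$, $\mathcal{A}\mathcal{B}$ is the ideal of finite sums of composites $ab$ with $a\in\mathcal{A}$, $b\in\mathcal{B}$ ($b$ applied first). $h$ is left $\mathcal{I}$-irreducible if $h\in\mathcal{I}$ and whenever $h=h_2h_1$ with $h_1\in\mathcal{I}$, $h_2$ is split epic; right $\mathcal{I}$-irreducible if $h\in\mathcal{I}$ and whenever $h=h_2h_1$ with $h_2\in\mathcal{I}$, $h_1$ is split monic; $\mathcal{I}$-irreducible if both. *)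

(* Defs.v *)
(* A Hom-finite K-linear category is encoded as a record whose
   Hom-spaces are finite-dimensional K-vector spaces (vectType K). *)
From HB Require Import structures.
From mathcomp Require Import all_boot all_order all_algebra.
Set Implicit Arguments. Unset Strict Implicit. Unset Printing Implicit Defensive.
Import GRing.Theory.
Local Open Scope ring_scope.

(* Composition of h1 then h2 is written comp h2 h1 ("h2 h1"). *)
Record KCategory (K : fieldType) := KCat {
  obj :> Type;
  mor : obj -> obj -> vectType K;
  comp : forall X Y Z : obj, mor Y Z -> mor X Y -> mor X Z;
  idm : forall X : obj, mor X X;
  compA : forall X Y Z W (h : mor Z W) (g : mor Y Z) (f : mor X Y),
      comp h (comp g f) = comp (comp h g) f;
  comp1m : forall X Y (f : mor X Y), comp (idm Y) f = f;
  compm1 : forall X Y (f : mor X Y), comp f (idm X) = f;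
  comp_linl : forall X Y Z (a : K) (g1 g2 : mor Y Z) (f : mor X Y),
      comp (a *: g1 + g2) f = a *: comp g1 f + comp g2 f;
  comp_linr : forall X Y Z (a : K) (g : mor Y Z) (f1 f2 : mor X Y),
      comp g (a *: f1 + f2) = a *: comp g f1 + comp g f2
}.
Arguments mor {K C} : rename.
Arguments comp {K C X Y Z} : rename.
Arguments idm {K C} : rename.

Section CatDefs.
Variables (K : fieldType) (C : KCategory K).

Definition invertible (X Y : C) (f : mor X Y) : Prop :=
  exists g : mor Y X, comp g f = idm X /\ comp f g = idm Y.

Definition split_epi (X Y : C) (f : mor X Y) : Prop :=
  exists s : mor Y X, comp f s = idm Y.

Definition split_mono (X Y : C) (f : mor X Y) : Prop :=
  exists r : mor Y X, comp r f = idm X.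

Definition is_zero_obj (O : C) : Prop := idm O = 0.

Definition is_biproduct (X A B : C) : Prop :=
  exists (p1 : mor X A) (p2 : mor X B) (s1 : mor A X) (s2 : mor B X),
    [/\ comp p1 s1 = idm A, comp p2 s2 = idm B, comp p1 s2 = 0,
        comp p2 s1 = 0 & comp s1 p1 + comp s2 p2 = idm X].

Definition indecomposable (X : C) : Prop :=
  idm X <> 0 /\
  forall A B : C, is_biproduct X A B -> is_zero_obj A \/ is_zero_obj B.

Definition local_end (Z : C) : Prop :=
  idm Z <> 0 /\ forall e : mor Z Z, invertible e \/ invertible (idm Z - e).

Definition krull_schmidt : Prop :=
  forall X : C, exists (n : nat) (Z : 'I_n -> C)
    (p : forall i, mor X (Z i)) (s : forall i, mor (Z i) X),
    [/\ forall i, local_end (Z i),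
        forall i, comp (p i) (s i) = idm (Z i),
        forall i j, i != j -> comp (p i) (s j) = 0
      & \sum_(i < n) comp (s i) (p i) = idm X].

Definition mor_pred := forall X Y : C, mor X Y -> Prop.

Definition is_ideal (I : mor_pred) : Prop :=
  [/\ forall X Y, I X Y 0,
      forall X Y (f g : mor X Y), I X Y f -> I X Y g -> I X Y (f - g),
      forall X Y Z (g : mor Y Z) (f : mor X Y), I X Y f -> I X Z (comp g f)
    & forall X Y Z (g : mor Y Z) (f : mor X Y), I Y Z g -> I X Z (comp g f)].

Definition jacobson_radical : mor_pred :=
  fun X Y f => forall g : mor Y X, invertible (idm X - comp g f).

(* AB: finite sums of composites a b with a in A, b in B (b applied first) *)
Definition ideal_prod (A B : mor_pred) : mor_pred :=
  fun X Y f => exists (n : nat) (Z : 'I_n -> C)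
    (a : forall i, mor (Z i) Y) (b : forall i, mor X (Z i)),
    [/\ forall i, A _ _ (a i), forall i, B _ _ (b i)
      & f = \sum_(i < n) comp (a i) (b i)].

Definition left_irreducible (I : mor_pred) (X Y : C) (f : mor X Y) : Prop :=
  I X Y f /\ forall (Z : C) (h1 : mor X Z) (h2 : mor Z Y),
    f = comp h2 h1 -> I X Z h1 -> split_epi h2.

Definition right_irreducible (I : mor_pred) (X Y : C) (f : mor X Y) : Prop :=
  I X Y f /\ forall (Z : C) (h1 : mor X Z) (h2 : mor Z Y),
    f = comp h2 h1 -> I Z Y h2 -> split_mono h1.

Definition irreducible (I : mor_pred) (X Y : C) (f : mor X Y) : Prop :=
  left_irreducible I f /\ right_irreducible I f.

Variables (shift : C -> C)
          (shiftm : forall X Y : C, mor X Y -> mor (shift X) (shift Y))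
          (dist : forall X Y Z : C,
                    mor X Y -> mor Y Z -> mor Z (shift X) -> Prop).

Definition additive_cat : Prop :=
  (exists O : C, is_zero_obj O) /\ (forall A B : C, exists X, is_biproduct X A B).

Definition shift_ok : Prop :=
  [/\ forall X, shiftm (idm X) = idm (shift X),
      forall X Y Z (g : mor Y Z) (f : mor X Y),
        shiftm (comp g f) = comp (shiftm g) (shiftm f),
      forall X Y (a : K) (f g : mor X Y),
        shiftm (a *: f + g) = a *: shiftm f + shiftm g,
      forall X Y, bijective (@shiftm X Y)
    & forall Y : C, exists X : C, exists f : mor (shift X) Y, invertible f].

Definition tri_mor X Y Z X' Y' Z'
  (u : mor X Y) (v : mor Y Z) (w : mor Z (shift X))
  (u' : mor X' Y') (v' : mor Y' Z') (w' : mor Z' (shift X'))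
  (a : mor X X') (b : mor Y Y') (c : mor Z Z') : Prop :=
  [/\ comp b u = comp u' a, comp c v = comp v' b
    & comp (shiftm a) w = comp w' c].

Definition TR1 : Prop :=
  [/\ (forall X Y Z X' Y' Z' (u : mor X Y) (v : mor Y Z) (w : mor Z (shift X))
          (u' : mor X' Y') (v' : mor Y' Z') (w' : mor Z' (shift X'))
          (a : mor X X') (b : mor Y Y') (c : mor Z Z'),
          dist u v w -> tri_mor u v w u' v' w' a b c ->
          invertible a -> invertible b -> invertible c -> dist u' v' w'),
      (forall (X O : C), is_zero_obj O ->
          dist (idm X) (0 : mor X O) (0 : mor O (shift X)))
    & (forall X Y (u : mor X Y), exists Z (v : mor Y Z) (w : mor Z (shift X)),
          dist u v w)].

Definition TR2 : Prop :=
  forall X Y Z (u : mor X Y) (v : mor Y Z) (w : mor Z (shift X)),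
    dist u v w <-> dist v w (- shiftm u).

Definition TR3 : Prop :=
  forall X Y Z X' Y' Z' (u : mor X Y) (v : mor Y Z) (w : mor Z (shift X))
    (u' : mor X' Y') (v' : mor Y' Z') (w' : mor Z' (shift X'))
    (a : mor X X') (b : mor Y Y'),
    dist u v w -> dist u' v' w' -> comp b u = comp u' a ->
    exists c : mor Z Z', tri_mor u v w u' v' w' a b c.

(* octahedral axiom (as in the Stacks project, Tag 05QK) *)
Definition TR4 : Prop :=
  forall X Y Z Q1 Q2 Q3 (f : mor X Y) (g : mor Y Z)
    (p1 : mor Y Q1) (d1 : mor Q1 (shift X))
    (p2 : mor Z Q2) (d2 : mor Q2 (shift X))
    (p3 : mor Z Q3) (d3 : mor Q3 (shift Y)),
    dist f p1 d1 -> dist (comp g f) p2 d2 -> dist g p3 d3 ->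
    exists (a : mor Q1 Q2) (b : mor Q2 Q3),
      [/\ dist a b (comp (shiftm p1) d3),
          tri_mor f p1 d1 (comp g f) p2 d2 (idm X) g a
        & tri_mor (comp g f) p2 d2 g p3 d3 f (idm Z) b].

Definition is_triangulated : Prop :=
  [/\ additive_cat, shift_ok, TR1, TR2 & (TR3 /\ TR4)].

End CatDefs.

(* Main.v *)
Require Import Defs.
From mathcomp Require Import all_boot all_order all_algebra.
From mathcomp Require Import zify.
From Stdlib Require Import Classical.
Import Defs.
Set Implicit Arguments. Unset Strict Implicit. Unset Printing Implicit Defensive.
Import GRing.Theory.

Section Lin.
Local Open Scope ring_scope.
Variables (K : fieldType) (C : KCategory K).
Implicit Types X Y Z W : C.

Lemma compDr X Y Z (g : mor Y Z) (f1 f2 : mor X Y) :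
  comp g (f1 + f2) = comp g f1 + comp g f2.
Proof. by have := comp_linr 1 g f1 f2; rewrite !scale1r. Qed.
Lemma compDl X Y Z (g1 g2 : mor Y Z) (f : mor X Y) :
  comp (g1 + g2) f = comp g1 f + comp g2 f.
Proof. by have := comp_linl 1 g1 g2 f; rewrite !scale1r. Qed.
Lemma comp0r X Y Z (g : mor Y Z) : comp g (0 : mor X Y) = 0.
Proof. by apply/(addrI (comp g 0)); rewrite addr0 -compDr addr0. Qed.
Lemma comp0l X Y Z (f : mor X Y) : comp (0 : mor Y Z) f = 0.
Proof. by apply/(addrI (comp 0 f)); rewrite addr0 -compDl addr0. Qed.
Lemma compNr X Y Z (g : mor Y Z) (f : mor X Y) : comp g (- f) = - comp g f.
Proof. by apply/eqP; rewrite -addr_eq0 -compDr addNr comp0r. Qed.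
Lemma compNl X Y Z (g : mor Y Z) (f : mor X Y) : comp (- g) f = - comp g f.
Proof. by apply/eqP; rewrite -addr_eq0 -compDl addNr comp0l. Qed.
Lemma compBr X Y Z (g : mor Y Z) (f1 f2 : mor X Y) :
  comp g (f1 - f2) = comp g f1 - comp g f2.
Proof. by rewrite compDr compNr. Qed.
Lemma compBl X Y Z (g1 g2 : mor Y Z) (f : mor X Y) :
  comp (g1 - g2) f = comp g1 f - comp g2 f.
Proof. by rewrite compDl compNl. Qed.
Lemma comp_sumr X Y Z (g : mor Y Z) (I : Type) (r : seq I) (P : pred I) (F : I -> mor X Y) :
  comp g (\sum_(i <- r | P i) F i) = \sum_(i <- r | P i) comp g (F i).
Proof. exact: (big_morph (comp g) (compDr g) (comp0r _ g)). Qed.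
Lemma comp_suml X Y Z (f : mor X Y) (I : Type) (r : seq I) (P : pred I) (F : I -> mor Y Z) :
  comp (\sum_(i <- r | P i) F i) f = \sum_(i <- r | P i) comp (F i) f.
Proof. exact: (big_morph (comp^~ f) (fun a b => compDl a b f) (comp0l _ f)). Qed.

Lemma inv0 X : invertible (0 : mor X X) -> idm X = 0.
Proof. by case=> g [h _]; rewrite -h comp0r. Qed.

Lemma swap_inv (A B : C) (a : mor A B) (b : mor B A) :
  invertible (idm B - comp a b) -> invertible (idm A - comp b a).
Proof.
case=> u [h1 h2]; exists (idm A + comp b (comp u a)); split.
- rewrite compDl comp1m (compBr (comp b (comp u a))) compm1.
  have -> : comp (comp b (comp u a)) (comp b a) = comp b (comp (comp u (comp a b)) a).
    by rewrite !compA.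
  rewrite -(compBr b) -(compBl u) -{1}[u]compm1 -(compBr u) h1 comp1m.
  by rewrite (subrK (comp b a)).
- rewrite (compDr (idm A - comp b a)) compm1 (compBl _ _ (comp b (comp u a))) comp1m.
  have -> : comp (comp b a) (comp b (comp u a)) = comp b (comp (comp (comp a b) u) a).
    by rewrite !compA.
  rewrite -(compBr b) -(compBl u) -{1}[u]comp1m -(compBl _ _ u) h2 comp1m.
  by rewrite (subrK (comp b a)).
Qed.

Lemma inv_comp (A B D : C) (x : mor B D) (y : mor A B) :
  invertible x -> invertible y -> invertible (comp x y).
Proof.
case=> x' [hx1 hx2] [y' [hy1 hy2]]; exists (comp y' x'); split.
- by rewrite compA -(compA y') hx1 compm1.
- by rewrite compA -(compA x) hy2 compm1.
Qed.

Lemma comp4 (A B D E F : C) (x : mor E F) (p : mor D E) (s : mor B D) (y : mor A B) :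
  comp (comp x p) (comp s y) = comp x (comp (comp p s) y).
Proof. by rewrite !compA. Qed.


Lemma J0 X Y : jacobson_radical (0 : mor X Y).
Proof. by move=> g; rewrite comp0r subr0; exists (idm X); rewrite comp1m. Qed.

Lemma Jl X Y W (f : mor X Y) (h : mor Y W) : jacobson_radical f -> jacobson_radical (comp h f).
Proof. by move=> Hf g; rewrite compA; apply: Hf. Qed.

Lemma Jr W X Y (f : mor X Y) (h : mor W X) : jacobson_radical f -> jacobson_radical (comp f h).
Proof.
move=> Hf g; rewrite compA; apply: (swap_inv (a := h) (b := comp g f)).
by rewrite compA; apply: Hf.
Qed.

Lemma JD X Y (f1 f2 : mor X Y) : jacobson_radical f1 -> jacobson_radical f2 -> jacobson_radical (f1 + f2).
Proof.
move=> H1 H2 g; have [u [hu1 hu2]] := H1 g.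
have E : idm X - comp g (f1 + f2) =
  comp (idm X - comp g f1) (idm X - comp (comp u g) f2).
  rewrite (compBr (idm X - comp g f1)) compm1 compA (compA _ u) hu2 comp1m.
  by rewrite compDr opprD addrA.
by rewrite E; apply: inv_comp; [exists u | apply: H2].
Qed.


Lemma collapse (A B : mor_pred C) (Hadd : additive_cat C)
  (hA0 : forall X Y, A X Y 0) (hB0 : forall X Y, B X Y 0)
  (hAD : forall X Y (f g : mor X Y), A X Y f -> A X Y g -> A X Y (f + g))
  (hBD : forall X Y (f g : mor X Y), B X Y f -> B X Y g -> B X Y (f + g))
  (hAr : forall W X Y (a : mor X Y) (h : mor W X), A X Y a -> A W Y (comp a h))
  (hBl : forall X Y W (b : mor X Y) (h : mor Y W), B X Y b -> B X W (comp h b))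
  X Y (f : mor X Y) :
  ideal_prod A B f ->
  exists (Z : C) (a : mor Z Y) (b : mor X Z), [/\ A _ _ a, B _ _ b & f = comp a b].
Proof.
case: Hadd => [[O hO] Hbi].
case=> n [Z [a [b [ha hb ->]]]]; elim: n Z a b ha hb => [|n IH] Z a b ha hb.
  by exists O, 0, 0; rewrite big_ord0 comp0l; split.
rewrite big_ord_recr /=.
have [W [a' [b' [ha' hb' ->]]]] := IH (fun i => Z (widen_ord (leqnSn n) i))
  (fun i => a (widen_ord _ i)) (fun i => b (widen_ord _ i)) (fun i => ha _) (fun i => hb _).
have [V [p1 [p2 [s1 [s2 [e1 e2 e3 e4 e5]]]]]] := Hbi W (Z ord_max).
exists V, (comp a' p1 + comp (a ord_max) p2), (comp s1 b' + comp s2 (b ord_max)); split.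
- by apply: hAD; apply: hAr.
- by apply: hBD; apply: hBl.
rewrite compDl !compDr !comp4 e1 e2 e3 e4 !comp0l !comp0r !comp1m.
by rewrite addr0 add0r.
Qed.

Lemma local_transfer (Y Z : C) (p : mor Y Z) (s : mor Z Y) :
  comp p s = idm Z -> comp s p = idm Y ->
  forall e, invertible (comp p (comp e s)) -> invertible e.
Proof.
move=> hps hsp e [u [hu1 hu2]]; exists (comp s (comp u p)); split.
- have -> : comp (comp s (comp u p)) e = comp s (comp (comp u (comp p (comp e s))) p).
    by rewrite !compA -(compA _ s p) hsp compm1.
  by rewrite hu1 comp1m hsp.
- have -> : comp e (comp s (comp u p)) = comp s (comp (comp (comp p (comp e s)) u) p).
    by rewrite !compA hsp comp1m.
  by rewrite hu2 comp1m hsp.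
Qed.

Lemma indec_local (Hadd : additive_cat C) (HKS : krull_schmidt C) (Y : C) :
  indecomposable Y -> forall e : mor Y Y, invertible e \/ invertible (idm Y - e).
Proof.
case: Hadd => [[O hO] Hbi] [HY0 HYind].
have [n [Z [p [s [hloc hps horth hsum]]]]] := HKS Y.
case: n Z p s hloc hps horth hsum => [|n] Z p s hloc hps horth hsum.
  by rewrite big_ord0 in hsum; rewrite hsum in HY0.
pose E k := \sum_(i < n.+1 | (0 < i)%N && (i < k)%N) comp (s i) (p i).
have step : forall k, exists (B : C) (q : mor Y B) (t : mor B Y),
    comp q t = idm B /\ comp t q = E k.
  elim=> [|k [B [q [t [hqt htq]]]]].
    exists O, 0, 0; split; first by rewrite comp0l hO.
    by rewrite comp0l /E big_pred0 // => i; rewrite ltn0 andbF.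
  case: (boolP ((0 < k) && (k < n.+1))%N) => hk; last first.
    exists B, q, t; split => //; rewrite htq /E; apply: eq_bigl => i.
    have := ltn_ord i; move: hk; case: (ltnP 0 i) => //= hi.
    case: (ltnP 0 k) => //= hk0; rewrite ?ltnS; lia.
  move/andP: hk => [hk0 hkn]; set kk := Ordinal hkn.
  have hE : E k.+1 = comp (s kk) (p kk) + E k.
    rewrite /E (bigD1 kk) /=; last by rewrite hk0 ltnSn.
    congr (_ + _); apply: eq_bigl => i.
    have -> : (i != kk) = (val i != k) by [].
    case: (ltnP 0 i) => //= hi; rewrite ltnS; lia.
  have hEs : comp (E k) (s kk) = 0.
    rewrite comp_suml big1 // => i /andP[_ hi].
    rewrite -compA horth ?comp0r //.
    by apply/eqP => h; move: hi; rewrite h /= ltnn.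
  have hpE : comp (p kk) (E k) = 0.
    rewrite comp_sumr big1 // => i /andP[_ hi].
    rewrite compA horth ?comp0l //.
    by apply/eqP => h; move: hi; rewrite -h /= ltnn.
  have hqs : comp q (s kk) = 0.
    by rewrite -[q]comp1m -hqt -(compA q t q) -compA htq hEs comp0r.
  have hpt : comp (p kk) t = 0.
    by rewrite -[t]compm1 -hqt (compA t q t) compA htq hpE comp0l.
  have [V [P1 [P2 [S1 [S2 [e1 e2 e3 e4 e5]]]]]] := Hbi B (Z kk).
  exists V, (comp S1 q + comp S2 (p kk)), (comp t P1 + comp (s kk) P2); split.
    rewrite compDl !compDr !comp4 hqt hqs hpt (hps kk) !comp1m !comp0l !comp0r.
    by rewrite addr0 add0r e5.
  rewrite compDl !compDr !comp4 e1 e2 e3 e4 !comp1m !comp0l !comp0r.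
  by rewrite addr0 add0r htq hE addrC.
have [B [q [t [hqt htq]]]] := step n.+1.
have hsum' : idm Y = comp (s ord0) (p ord0) + E n.+1.
  rewrite -hsum (bigD1 ord0) //=; congr (_ + _); apply: eq_bigl => i.
  by rewrite ltn_ord andbT lt0n.
have hpE : comp (p ord0) (E n.+1) = 0.
  rewrite comp_sumr big1 // => i /andP[hi _].
  by rewrite compA horth ?comp0l // eq_sym -lt0n.
have hEs : comp (E n.+1) (s ord0) = 0.
  rewrite comp_suml big1 // => i /andP[hi _].
  by rewrite -compA horth ?comp0r // -lt0n.
have hbi : is_biproduct Y (Z ord0) B.
  exists (p ord0), q, (s ord0), t; split => //.
  - by rewrite -[t]compm1 -hqt (compA t q t) compA htq hpE comp0l.
  - by rewrite -[q]comp1m -hqt -(compA q t q) -compA htq hEs comp0r.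
  - by rewrite htq -hsum'.
have hsp : comp (s ord0) (p ord0) = idm Y.
  case: (HYind _ _ hbi) => hz.
    by case: (hloc ord0) => h _; rewrite /is_zero_obj in hz; rewrite hz in h.
  rewrite hsum' -htq -[q]comp1m hz comp0l comp0r.
  by rewrite addr0.
move=> e; case: (hloc ord0) => _ /(_ (comp (p ord0) (comp e (s ord0)))) [h|h].
  by left; apply: (local_transfer (hps ord0) hsp).
right; apply: (local_transfer (hps ord0) hsp).
by rewrite (compBl _ _ (s ord0)) comp1m (compBr (p ord0)) hps.
Qed.
End Lin.


Theorem lemma4p6 (K : closedFieldType) (C : KCategory K)
  (shift : C -> C)
  (shiftm : forall X Y : C, mor X Y -> mor (shift X) (shift Y))
  (dist : forall X Y Z : C, mor X Y -> mor Y Z -> mor Z (shift X) -> Prop)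
  (Htri : is_triangulated shiftm dist)
  (HKS : krull_schmidt C)
  (I : mor_pred C) (HI : is_ideal I)
  (X Y : C) (f : mor X Y)
  (HX : indecomposable X) (HY : indecomposable Y) :
  let J := @jacobson_radical K C in
  [/\ left_irreducible I f <-> I X Y f /\ ~ ideal_prod J I f,
      right_irreducible I f <-> I X Y f /\ ~ ideal_prod I J f
    & irreducible I f <->
        I X Y f /\ ~ (ideal_prod J I f \/ ideal_prod I J f)].
Proof.
move=> J; case: Htri => Hadd _ _ _ _.
case: HI => hI0 hIB hIl hIr.
have hID : forall X Y (f g : mor X Y), I X Y f -> I X Y g -> I X Y (f + g)%R.
  move=> X' Y' f1 g1 h1 h2; have := hIB _ _ _ _ h1 (hIB _ _ _ _ (hI0 X' Y') h2).
  by rewrite GRing.sub0r GRing.opprK.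
have hloc := indec_local Hadd HKS.
have H1 : left_irreducible I f <-> I X Y f /\ ~ ideal_prod J I f.
  split.
  - case=> hf hirr; split=> // hJI.
    have [Z [a [b [ha hb e]]]] := collapse Hadd (@J0 _ C) hI0 (@JD _ C) hID (@Jr _ C) (fun X Y W b h => hIl X Y W h b) hJI.
    have [s hs] := hirr _ _ _ e hb.
    have := swap_inv (ha s); rewrite hs GRing.subrr => /inv0 h.
    by case: HY.
  - case=> hf hn; split=> // Z h1 h2 e hh1.
    case: (classic (jacobson_radical h2)) => hJ.
      exfalso; apply: hn; exists 1%N, (fun _ => Z), (fun _ => h2), (fun _ => h1).
      by split=> //; rewrite big_ord1.
    have [g hg] : exists g, ~ invertible (idm Z - comp g h2)%R by apply: not_all_ex_not.
    case: (hloc Y HY (comp h2 g)) => [[v [hv1 hv2]]|hinv].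
      by exists (comp g v); rewrite compA.
    by case: hg; apply: swap_inv.
have H2 : right_irreducible I f <-> I X Y f /\ ~ ideal_prod I J f.
  split.
  - case=> hf hirr; split=> // hIJ.
    have [Z [a [b [ha hb e]]]] := collapse Hadd hI0 (@J0 _ C) hID (@JD _ C) hIr (@Jl _ C) hIJ.
    have [r hr] := hirr _ _ _ e ha.
    have := hb r; rewrite hr GRing.subrr => /inv0 h.
    by case: HX.
  - case=> hf hn; split=> // Z h1 h2 e hh2.
    case: (classic (jacobson_radical h1)) => hJ.
      exfalso; apply: hn; exists 1%N, (fun _ => Z), (fun _ => h2), (fun _ => h1).
      by split=> //; rewrite big_ord1.
    have [g hg] : exists g, ~ invertible (idm X - comp g h1)%R by apply: not_all_ex_not.
    case: (hloc X HX (comp g h1)) => [[v [hv1 hv2]]|//].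
    by exists (comp v g); rewrite -compA.
split=> //; move: H1 H2; rewrite /irreducible; tauto.
Qed.
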